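(* Let $X\in\{\mathsf{T}\mathsf{S},\ \mathsf{T}\mathsf{S}\mathsf{T}\}$ and $Y\in\{\mathsf{S}\mathsf{T},\ \mathsf{S}\mathsf{T}\mathsf{S},\ \mathsf{S}\mathsf{T}\mathsf{S}\mathsf{T}\}$. Then $X\not\sqsubseteq Y$ and $Y\not\sqsubseteq X$.
   Context: Fix attribute–taxonomy pairs $A_1{:}T_1,\dots,A_d{:}T_d$ with distinct attribute names, where each taxonomy $T_i=(V_i,\le_{V_i})$ is a poset. A t-tuple over a t-schema $S\subseteq\{A_1{:}T_1,\dots,A_d{:}T_d\}$ maps each $A_i$ in $S$ to a value of $V_i$; $\mathcal{D}$ is the set of all t-tuples over all such t-schemas. A preference relation is a binary relation $\succeq$ on $\mathcal{D}$. Preferences are given by a formula $F(x,y)=\bigvee_i P_i(x,y)$, a disjunction of statements; each statement $P_i$ is a disjunction of clauses, each clause a satisfiable conjunction of atoms of the forms $x[A_i]\le_{V_i} v$, $x[A_i]\not\le_{V_i} v$, $y[A_i]\le_{V_i} v$, $y[A_i]\not\le_{V_i} v$; the formula induces $t_1\succeq t_2\iff F(t_1,t_2)$. Operator $\mathsf{T}$ maps a formula to one inducing the transitive closure over $\mathcal{D}$ of the induced relation. Operator $\mathsf{S}$ (specificity-based refinement): repeat rounds; in a round, for each statement $P_i$ let $\mathrm{Impl}(P_i)$ be the set of statements $P_j$ such that $P_j(t_2,t_1)\Rightarrow P_i(t_1,t_2)$ for all $t_1,t_2\in\mathcal{D}$ but not conversely; simultaneously replace every $P_i$ with nonempty $\mathrm{Impl}(P_i)$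 by $P_i(x,y)\wedge\bigwedge_{P_j\in \mathrm{Impl}(P_i)}\neg P_j(y,x)$; stop when no $\mathrm{Impl}$ set is nonempty. After each operator, contradictory clauses and subsumed statements are removed. For $X\in\{\mathsf{T},\mathsf{S}\}^*$, $\succeq_X$ is the relation induced by applying the operators of $X$ in order to the initial formula. Containment $X\sqsubseteq Y$ means $\succeq_X\subseteq\succeq_Y$ for every initial preference formula (over any taxonomies). *)

(* Defs.v *)
From mathcomp Require Import all_boot.
From Stdlib Require Import List.

Set Implicit Arguments.
Unset Strict Implicit.
Unset Printing Implicit Defensive.

Record taxonomy := Taxonomy {
  tcar : Type;
  tle : tcar -> tcar -> Prop;
  tle_refl : forall a, tle a a;
  tle_anti : forall a b, tle a b -> tle b a -> a = b;
  tle_trans : forall a b c, tle a b -> tle b c -> tle a c }.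
Arguments tle : clear implicits.
Arguments tle {t}.

(* Fixed attribute-taxonomy pairs A_1:T_1, ..., A_d:T_d; attribute A_i is
   identified with the index i : 'I_d (so names are distinct). *)
Record tsetting := TSetting {
  nattr : nat;
  tax : 'I_nattr -> taxonomy }.
Arguments tax : clear implicits.

(* A t-tuple over some t-schema S: attributes outside S are mapped to None.
   D := ttuple s is the set of all t-tuples over all t-schemas. *)
Definition ttuple (s : tsetting) := forall i : 'I_(nattr s), option (tcar (tax s i)).

Definition prel (s : tsetting) := ttuple s -> ttuple s -> Prop.

Definition val_le (s : tsetting) (t : ttuple s) (i : 'I_(nattr s))
  (v : tcar (tax s i)) : Prop :=
  match t i with Some a => tle a v | None => False end.

Inductive atom (s : tsetting) :=
| XLe  (i : 'I_(nattr s)) (v : tcar (tax s i))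
| XNle (i : 'I_(nattr s)) (v : tcar (tax s i))
| YLe  (i : 'I_(nattr s)) (v : tcar (tax s i))
| YNle (i : 'I_(nattr s)) (v : tcar (tax s i)).

Definition atom_holds (s : tsetting) (a : atom s) (x y : ttuple s) : Prop :=
  match a with
  | XLe i v => val_le x v
  | XNle i v => ~ val_le x v
  | YLe i v => val_le y v
  | YNle i v => ~ val_le y v
  end.

Definition clause (s : tsetting) := list (atom s).
Definition clause_holds (s : tsetting) (c : clause s) (x y : ttuple s) : Prop :=
  forall a, List.In a c -> atom_holds a x y.

Definition statement (s : tsetting) := list (clause s).
Definition stmt_holds (s : tsetting) (st : statement s) (x y : ttuple s) : Prop :=
  exists c, List.In c st /\ clause_holds c x y.

Definition formula (s : tsetting) := list (statement s).

Definition wf_formula (s : tsetting) (F : formula s) : Prop :=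
  F <> nil /\
  forall st, List.In st F ->
    st <> nil /\ forall c, List.In c st -> exists x y : ttuple s, clause_holds c x y.

(* Semantic representation of a formula: the set of (relations induced by)
   its statements. *)
Definition stmts (s : tsetting) := prel s -> Prop.

Definition sem (s : tsetting) (F : formula s) : stmts s :=
  fun P => exists st, List.In st F /\ P = stmt_holds st.

Definition induced (s : tsetting) (G : stmts s) : prel s :=
  fun x y => exists P, G P /\ P x y.

Definition implies (s : tsetting) (P Q : prel s) : Prop :=
  forall x y, P x y -> Q x y.

(* removal of subsumed statements (contradictory clauses are semantically void) *)
Definition prune (s : tsetting) (G : stmts s) : stmts s :=
  fun P => G P /\ ~ (exists Q, G Q /\ implies P Q /\ ~ implies Q P).

(* Operator T: statements of the result are the compositions of nonempty
   chains of statements (their union is the transitive closure), then pruned. *)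
Fixpoint chain (s : tsetting) (P : prel s) (l : list (prel s)) : prel s :=
  match l with
  | nil => P
  | Q :: l' => fun x y => exists z, P x z /\ chain Q l' z y
  end.

Definition chains (s : tsetting) (G : stmts s) : stmts s :=
  fun R => exists P l, G P /\ (forall Q, List.In Q l -> G Q) /\ R = chain P l.

Definition Tstep (s : tsetting) (G : stmts s) : stmts s := prune (chains G).

Definition impl (s : tsetting) (G : stmts s) (P Q : prel s) : Prop :=
  G Q /\ (forall x y, Q y x -> P x y) /\ ~ (forall x y, P x y -> Q y x).

Definition refine (s : tsetting) (G : stmts s) (P : prel s) : prel s :=
  fun x y => P x y /\ forall Q, impl G P Q -> ~ Q y x.

Definition Sround (s : tsetting) (G : stmts s) : stmts s :=
  fun R => exists P, G P /\ R = refine G P.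

Definition Sstable (s : tsetting) (G : stmts s) : Prop :=
  forall P Q, G P -> ~ impl G P Q.

(* S G H : the rounds reach a stage with all Impl sets empty, and H is that
   stage after pruning. (Deterministic; undefined if rounds never stop.) *)
Definition Sres (s : tsetting) (G H : stmts s) : Prop :=
  exists n, Sstable (iter n (@Sround s) G) /\ H = prune (iter n (@Sround s) G).

Inductive op := OpT | OpS.

Definition step (s : tsetting) (o : op) (G H : stmts s) : Prop :=
  match o with
  | OpT => H = Tstep G
  | OpS => Sres G H
  end.

Fixpoint Eval (s : tsetting) (w : list op) (G H : stmts s) : Prop :=
  match w with
  | nil => H = G
  | o :: w' => exists K, step o G K /\ Eval w' K H
  end.

Definition contained (X Y : list op) : Prop :=
  forall (s : tsetting) (F : formula s), wf_formula F ->
  forall GX GY, Eval X (sem F) GX -> Eval Y (sem F) GY ->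
  forall x y, induced GX x y -> induced GY x y.

(* Main.v *)
Require Import Defs.
From mathcomp Require Import all_boot.
From Stdlib Require Import Classical.

Set Implicit Arguments.
Unset Strict Implicit.
Unset Printing Implicit Defensive.

Definition dtax : taxonomy :=
  @Taxonomy nat (fun a b => a = b) (fun a => erefl a) (fun a b h _ => h)
    (fun a b c h1 h2 => etrans h1 h2).
Definition s0 : tsetting := @TSetting 1 (fun _ => dtax).

Definition pt (a : nat) : ttuple s0 := fun _ => Some a.
Definition o0 : 'I_(nattr s0) := @ord0 0.

Definition R (r : seq (nat * nat)) : prel s0 :=
  fun x y => exists a b : nat, x o0 = Some a /\ y o0 = Some b /\ (a, b) \in r.

Definition req (P Q : prel s0) := forall x y, P x y <-> Q x y.

Lemma R_pt r a b : R r (pt a) (pt b) <-> (a, b) \in r.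
Proof.
split; first by case=> a' [b'] [[<-] [[<-]]].
by move=> H; exists a, b.
Qed.

Definition sub (r1 r2 : seq (nat * nat)) := all (fun pr => pr \in r2) r1.
Definition csub (q r : seq (nat * nat)) := all (fun pr => (pr.2, pr.1) \in r) q.
Definition implq r q := csub q r && ~~ csub r q.

Lemma subP r1 r2 : Defs.implies (R r1) (R r2) <-> sub r1 r2.
Proof.
split.
- move=> H; apply/allP=> [[a b]] Hab.
  by have /R_pt := H (pt a) (pt b) (proj2 (R_pt _ _ _) Hab).
- move=> /allP H x y [a [b [Hx [Hy Hab]]]]; exists a, b; split=> //; split=> //.
  exact: H.
Qed.

Lemma csubP q r : (forall x y, R q y x -> R r x y) <-> csub q r.
Proof.
split.
- move=> H; apply/allP=> [[a b]] Hab /=.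
  by have /R_pt := H (pt b) (pt a) (proj2 (R_pt _ _ _) Hab).
- move=> /allP H x y [a [b [Hy [Hx Hab]]]]; exists b, a; split=> //; split=> //.
  exact: (H (a, b)).
Qed.

Definition rep (G : stmts s0) (Ls : seq (seq (nat * nat))) :=
  (forall P, G P -> exists2 r, r \in Ls & req P (R r)) /\
  (forall r, r \in Ls -> exists P, G P /\ req P (R r)).

Lemma implies_req P Q p q : req P (R p) -> req Q (R q) ->
  (Defs.implies P Q <-> sub p q).
Proof.
move=> HP HQ; rewrite -subP; split=> H x y.
- by move=> /HP /H /HQ.
- by move=> /HP /H /HQ.
Qed.

Definition stmt_of (r : seq (nat * nat)) : statement s0 :=
  seq.map (fun pr => [:: @XLe s0 o0 pr.1; @YLe s0 o0 pr.2]) r.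

Lemma InPs (T : eqType) (x : T) s : reflect (List.In x s) (x \in s).
Proof.
elim: s => [|y s IH] /=; first by constructor.
rewrite inE; apply: (iffP orP).
- by case=> [/eqP ->|/IH]; [left|right].
- by case=> [->|/IH]; [left; rewrite eqxx|right].
Qed.

Lemma In_map (A B : Type) (f : A -> B) s y :
  List.In y (seq.map f s) <-> exists x, List.In x s /\ y = f x.
Proof.
elim: s => [|x s IH] /=; first by split=> // [[x []]].
split.
- case=> [Hy|Hin]; first by exists x; split; [left|].
  have [z [Hz ->]] := proj1 IH Hin.
  by exists z; split; [right|].
- case=> z [[<-|Hz] Ey]; first by left; rewrite Ey.
  by right; apply (proj2 IH); exists z.
Qed.

Lemma stmt_ofE r : req (stmt_holds (stmt_of r)) (R r).
Proof.
move=> x y; split.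
- case=> c [/In_map [[a b] [/InPs Hab ->]]] Hc.
  have Ha := Hc _ (or_introl erefl).
  have Hb := Hc _ (or_intror (or_introl erefl)).
  move: Ha Hb; rewrite /= /val_le.
  case Ex: (x o0) => [a'|] //; case Ey: (y o0) => [b'|] // Ha Hb.
  exists a', b'; split=> //; split=> //.
  have -> : a' = a := Ha.
  by have -> : b' = b := Hb.
- case=> a [b [Hx [Hy Hab]]].
  exists [:: @XLe s0 o0 a; @YLe s0 o0 b]; split.
    by apply/In_map; exists (a, b); split=> //; apply/InPs.
  move=> at0 [<-|[<-|[]]] /=; rewrite /val_le; [rewrite Hx|rewrite Hy] => //.
Qed.

Lemma rep_sem Ls : rep (sem (seq.map stmt_of Ls)) Ls.
Proof.
split.
- move=> P [st [/In_map [r [/InPs Hr ->]] ->]]; exists r => //; exact: stmt_ofE.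
- move=> r Hr; exists (stmt_holds (stmt_of r)); split; last exact: stmt_ofE.
  by exists (stmt_of r); split=> //; apply/In_map; exists r; split=> //; apply/InPs.
Qed.

Lemma wf_sem Ls : Ls != [::] -> all (fun r => r != [::]) Ls ->
  wf_formula (seq.map stmt_of Ls).
Proof.
move=> HL Hne0; have Hne := allP Hne0; split; first by clear Hne; case: Ls HL Hne0.
move=> st /In_map [r [/InPs Hr ->]]; split; first by case: r Hr => //= /Hne.
move=> c /In_map [[a b] [_ ->]]; exists (pt a), (pt b).
by move=> at0 [<-|[<-|[]]].
Qed.

Lemma induced_rep G Ls a b : rep G Ls ->
  (induced G (pt a) (pt b) <-> has (fun r => (a, b) \in r) Ls).
Proof.
move=> [H1 H2]; split.
- case=> P [GP HP]; have [r Hr E] := H1 _ GP.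
  by apply/hasP; exists r => //; apply/R_pt/E.
- move=> /hasP [r Hr Hab]; have [P [GP E]] := H2 _ Hr.
  by exists P; split=> //; apply/E/R_pt.
Qed.

Definition prune_l (Ls : seq (seq (nat * nat))) :=
  [seq r <- Ls | ~~ has (fun r' => sub r r' && ~~ sub r' r) Ls].

Lemma rep_prune G Ls : rep G Ls -> rep (prune G) (prune_l Ls).
Proof.
move=> [H1 H2]; split.
- move=> P [GP HP]; have [r Hr E] := H1 _ GP; exists r => //.
  rewrite mem_filter Hr andbT; apply/hasPn=> r' Hr'; apply/negP=> /andP [S1 S2].
  apply: HP; have [Q [GQ EQ]] := H2 _ Hr'; exists Q; split=> //.
  rewrite (implies_req E EQ) (implies_req EQ E); split=> //.
  by move=> S3; rewrite S3 in S2.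
- move=> r; rewrite mem_filter => /andP [/hasPn Hn Hr].
  have [P [GP E]] := H2 _ Hr; exists P; split=> //; split=> //.
  case=> Q [GQ [I1 I2]]; have [q Hq EQ] := H1 _ GQ.
  move: I1 I2; rewrite (implies_req E EQ) (implies_req EQ E) => I1 I2.
  by have := Hn _ Hq; rewrite I1 /=; case: (sub q r) I2.
Qed.

Definition refine_l (Ls : seq (seq (nat * nat))) r :=
  [seq pr <- r | ~~ has (fun q => implq r q && ((pr.2, pr.1) \in q)) Ls].
Definition sround_l Ls := seq.map (refine_l Ls) Ls.

Lemma impl_req G Ls P Q r q : rep G Ls -> req P (R r) -> req Q (R q) ->
  (impl G P Q <-> G Q /\ implq r q).
Proof.
move=> _ EP EQ; rewrite /impl /implq; split.
- case=> GQ [C1 C2]; split=> //; apply/andP; split.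
    by apply/csubP => x y /EQ /C1 /EP.
  apply/negP => /csubP C3; apply: C2 => x y /EP /C3 /EQ.
  done.
- case=> GQ /andP [/csubP C1 C2]; split=> //; split.
    by move=> x y /EQ /C1 /EP.
  move=> C3; move/negP: C2; apply; apply/csubP => x y /EP /C3 /EQ; done.
Qed.

Lemma refine_req G Ls P r : rep G Ls -> req P (R r) ->
  req (refine G P) (R (refine_l Ls r)).
Proof.
move=> HG EP x y; have [H1 H2] := HG; split.
- case=> /EP [a [b [Hx [Hy Hab]]]] HQ; exists a, b; split=> //; split=> //.
  rewrite mem_filter Hab andbT; apply/hasPn=> q Hq; apply/negP=> /andP [Iq Hba].
  have [Q [GQ EQ]] := H2 _ Hq.
  apply: (HQ Q); first by apply/(impl_req HG EP EQ).
  by apply/EQ; exists b, a.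
- case=> a [b [Hx [Hy]]]; rewrite mem_filter => /andP [/hasPn Hn Hab].
  split; first by apply/EP; exists a, b.
  move=> Q /(fun h => h) HI HQ.
  have GQ : G Q by case: HI.
  have [q Hq EQ] := H1 _ GQ.
  have [_ Iq] := proj1 (impl_req HG EP EQ) HI.
  have := Hn _ Hq; rewrite Iq /=.
  case/EQ: HQ => b' [a' [Hy' [Hx' Hba]]].
  move: Hy'; rewrite Hy => -[Eb]; move: Hx'; rewrite Hx => -[Ea].
  by rewrite Eb Ea Hba.
Qed.

Lemma rep_sround G Ls : rep G Ls -> rep (Sround G) (sround_l Ls).
Proof.
move=> HG; have [H1 H2] := HG; split.
- move=> P' [P [GP ->]]; have [r Hr E] := H1 _ GP.
  exists (refine_l Ls r); first exact: map_f.
  exact: refine_req HG E.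
- move=> r' /mapP [r Hr ->]; have [P [GP E]] := H2 _ Hr.
  exists (refine G P); split; first by exists P.
  exact: refine_req HG E.
Qed.

Lemma rep_iter n G Ls : rep G Ls ->
  rep (iter n (@Sround s0) G) (iter n sround_l Ls).
Proof.
move=> HG; elim: n => [|n IH] //=; exact: rep_sround.
Qed.

Definition stable_l Ls := all (fun r => all (fun q => ~~ implq r q) Ls) Ls.

Lemma rep_stable G Ls : rep G Ls -> stable_l Ls -> Sstable G.
Proof.
move=> HG /allP HS P Q GP HI; have [H1 H2] := HG.
have [r Hr EP] := H1 _ GP.
have GQ : G Q by case: HI.
have [q Hq EQ] := H1 _ GQ.
have [_ Iq] := proj1 (impl_req HG EP EQ) HI.
by have := allP (HS _ Hr) _ Hq; rewrite Iq.
Qed.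

Lemma stepS G Ls n : rep G Ls -> stable_l (iter n sround_l Ls) ->
  exists H, step OpS G H /\ rep H (prune_l (iter n sround_l Ls)).
Proof.
move=> HG HS; exists (prune (iter n (@Sround s0) G)); split.
  exists n; split=> //; exact: rep_stable (rep_iter n HG) HS.
exact: rep_prune (rep_iter n HG).
Qed.

Definition comp (r1 r2 : seq (nat * nat)) : seq (nat * nat) :=
  [seq (pp.1.1, pp.2.2) | pp <- [seq pp <- [seq (p1, p2) | p1 <- r1, p2 <- r2]
                                 | pp.1.2 == pp.2.1]].

Lemma compP r1 r2 x y :
  (exists z, R r1 x z /\ R r2 z y) <-> R (comp r1 r2) x y.
Proof.
split.
- case=> z [[a [c [Hx [Hz Hac]]]] [c' [b [Hz' [Hy Hcb]]]]].
  move: Hz'; rewrite Hz => -[Ec]; rewrite -Ec in Hcb.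
  exists a, b; split=> //; split=> //.
  apply/mapP; exists ((a, c), (c, b)) => //.
  rewrite mem_filter eqxx /=; apply/allpairsP; by exists ((a, c), (c, b)).
- case=> a [b [Hx [Hy /mapP [[[a1 c1] [c2 b2]] Hpp [Ea Eb]]]]].
  move: Hpp; rewrite mem_filter /= => /andP [/eqP Ec /allpairsP [[p1 p2] [H1 H2 [E1 E2]]]].
  exists (pt c1); split.
    exists a, c1; split=> //; split=> //; by rewrite Ea; rewrite -E1 in H1.
  exists c1, b; split=> //; split=> //; by rewrite Eb Ec; rewrite -E2 in H2.
Qed.

Fixpoint compw (w : seq (seq (nat * nat))) : seq (nat * nat) :=
  match w with
  | [::] => [::]
  | [:: r] => r
  | r :: w' => comp r (compw w')
  end.

Lemma realize G Ls w : rep G Ls -> w != [::] -> all (fun r => r \in Ls) w ->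
  exists P l, G P /\ (forall Q, List.In Q l -> G Q) /\ req (chain P l) (R (compw w)).
Proof.
move=> [H1 H2]; elim: w => [|r w IH] // _ /= /andP [Hr Hw].
have [Pr [GPr Er]] := H2 _ Hr.
case: w IH Hw => [|r' w'] IH Hw.
  by exists Pr, [::]; split=> //; split.
have [P [l [GP [Gl E]]]] := IH isT Hw.
exists Pr, (P :: l); split=> //; split.
  by move=> Q [<-|/Gl].
move=> x y /=; rewrite -compP; split.
- by case=> z [/Er H /E H']; exists z.
- by case=> z [/Er H /E H']; exists z.
Qed.

Lemma chain_bound G Ls Ms : rep G Ls ->
  all (fun r => has (sub r) Ms) Ls ->
  all (fun r => all (fun m => has (sub (comp r m)) Ms) Ms) Ls ->
  forall l P, G P -> (forall Q, List.In Q l -> G Q) ->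
  exists2 m, m \in Ms & Defs.implies (chain P l) (R m).
Proof.
move=> [H1 H2] /allP Hc /allP Hcl; elim=> [|Q l IH] P GP Gl /=.
- have [r Hr E] := H1 _ GP; have /hasP [m Hm Hs] := Hc _ Hr.
  exists m => //; move=> x y /E; exact: (proj2 (subP r m) Hs).
- have [m Hm Hs] := IH Q (Gl _ (or_introl erefl)) (fun Q' h => Gl _ (or_intror h)).
  have [r Hr E] := H1 _ GP.
  have /hasP [m' Hm' Hs'] := allP (Hcl _ Hr) _ Hm.
  exists m' => // x y [z [/E Hxz /Hs Hzy]].
  apply: (proj2 (subP _ _) Hs'); apply/compP; by exists z.
Qed.

Lemma stepT G Ls Ms Ws : rep G Ls ->
  all (fun r => has (sub r) Ms) Ls ->
  all (fun r => all (fun m => has (sub (comp r m)) Ms) Ms) Ls ->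
  all (fun w => (w != [::]) && all (fun r => r \in Ls) w) Ws ->
  all (fun m => has (fun w => sub (compw w) m && sub m (compw w)) Ws) Ms ->
  all (fun m => all (fun m' => sub m m' ==> sub m' m) Ms) Ms ->
  exists H, step OpT G H /\ rep H Ms.
Proof.
move=> HG Hc Hcl /allP HW /allP HR /allP Hinc.
have real : forall m, m \in Ms -> exists P, chains G P /\ req P (R m).
  move=> m Hm; have /hasP [w Hw /andP [S1 S2]] := HR _ Hm.
  have /andP [Hw1 Hw2] := HW _ Hw.
  have [P [l [GP [Gl E]]]] := realize HG Hw1 Hw2.
  exists (chain P l); split; first by exists P, l.
  move=> x y; split.
  - by move/E; apply: (proj2 (subP _ _) S1).
  - by move=> H; apply/E; apply: (proj2 (subP _ _) S2).
exists (Tstep G); split=> //; split.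
- move=> P [[P0 [l [GP0 [Gl ->]]]] Hpr].
  have [m Hm Hs] := chain_bound HG Hc Hcl GP0 Gl.
  exists m => //.
  have [Pm [Cm Em]] := real _ Hm.
  case: (classic (Defs.implies (R m) (chain P0 l))) => Hrev.
    by move=> x y; split; [apply: Hs|apply: Hrev].
  exfalso; apply: Hpr; exists Pm; split=> //; split.
    by move=> x y /Hs /Em.
  by move=> H; apply: Hrev => x y /Em /H.
- move=> m Hm; have [Pm [Cm Em]] := real _ Hm; exists Pm; split=> //.
  split=> // -[Q [[P0 [l [GP0 [Gl EQ]]]] [I1 I2]]].
  have [m' Hm' Hs] := chain_bound HG Hc Hcl GP0 Gl.
  rewrite -EQ in Hs.
  have Smm' : sub m m'.
    by apply/subP => x y /Em /I1 /Hs.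
  have := allP (Hinc _ Hm) _ Hm'; rewrite Smm' /= => /subP Sm'm.
  by apply: I2 => x y /Hs /Sm'm /Em.
Qed.

Definition reach w (G : stmts s0) Lf := exists H, Eval w G H /\ rep H Lf.

Lemma reach_nil G L : rep G L -> reach [::] G L.
Proof. by move=> HG; exists G. Qed.

Lemma reach_T w G Ls Ms Ws Lf : rep G Ls ->
  all (fun r => has (sub r) Ms) Ls ->
  all (fun r => all (fun m => has (sub (comp r m)) Ms) Ms) Ls ->
  all (fun w => (w != [::]) && all (fun r => r \in Ls) w) Ws ->
  all (fun m => has (fun w => sub (compw w) m && sub m (compw w)) Ws) Ms ->
  all (fun m => all (fun m' => sub m m' ==> sub m' m) Ms) Ms ->
  (forall K, rep K Ms -> reach w K Lf) -> reach (OpT :: w) G Lf.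
Proof.
move=> HG c1 c2 c3 c4 c5 Hn.
have [K [SK RK]] := stepT HG c1 c2 c3 c4 c5.
have [H [EH RH]] := Hn _ RK; exists H; split=> //; by exists K.
Qed.

Lemma reach_S n L' w G Ls Lf : rep G Ls -> stable_l (iter n sround_l Ls) ->
  prune_l (iter n sround_l Ls) == L' ->
  (forall K, rep K L' -> reach w K Lf) -> reach (OpS :: w) G Lf.
Proof.
move=> HG HS /eqP HE Hn.
have [K [SK RK]] := stepS HG HS; rewrite HE in RK.
have [H [EH RH]] := Hn _ RK; exists H; split=> //; by exists K.
Qed.

Definition M1 : seq (nat * nat) := [:: (0,1); (1,0); (0,0); (1,1)].
Definition Q1 : seq (nat * nat) := [:: (0,1)].
Definition M1' : seq (nat * nat) := [:: (0,1); (0,0); (1,1)].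
Definition L1 := [:: M1; Q1].
Definition F1 := seq.map stmt_of L1.

Lemma F1_T G : rep G [:: M1] -> forall w Lf, (forall K, rep K [:: M1] -> reach w K Lf) ->
  reach (OpT :: w) G Lf.
Proof. move=> HG w Lf Hn; apply: (@reach_T _ _ _ [:: M1] [:: [:: M1]]) HG _ _ _ _ _ Hn; by []. Qed.

Lemma F1_X X : X = [:: OpT; OpS] \/ X = [:: OpT; OpS; OpT] ->
  reach X (sem F1) [:: M1].
Proof.
have H0 := rep_sem L1.
case=> ->.
- apply: (@reach_T _ _ _ [:: M1] [:: [:: M1]]) H0 _ _ _ _ _ _ => //.
  move=> K HK; apply: (@reach_S 0 [:: M1]) HK _ _ _ => //.
  by move=> ? /reach_nil.
- apply: (@reach_T _ _ _ [:: M1] [:: [:: M1]]) H0 _ _ _ _ _ _ => //.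
  move=> K HK; apply: (@reach_S 0 [:: M1]) HK _ _ _ => //.
  move=> K' HK'; apply: F1_T HK' _ _ _ => K2 /reach_nil //.
Qed.

Lemma T' G w Lf : rep G [:: M1'] -> (forall K, rep K [:: M1'] -> reach w K Lf) ->
    reach (OpT :: w) G Lf.
Proof. move=> HG Hn; apply: (@reach_T _ _ _ [:: M1'] [:: [:: M1']]) HG _ _ _ _ _ Hn; by []. Qed.

Lemma F1_Y Y : Y = [:: OpS; OpT] \/ Y = [:: OpS; OpT; OpS] \/ Y = [:: OpS; OpT; OpS; OpT] ->
  reach Y (sem F1) [:: M1'].
Proof.
have H0 := rep_sem L1.
case=> [->|[->|->]]; apply: (@reach_S 1 [:: M1']) H0 _ _ _ => // K HK;
  apply: T' HK _ => K1 HK1.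
- exact: reach_nil.
- by apply: (@reach_S 0 [:: M1']) HK1 _ _ _ => // K2 HK2; exact: reach_nil.
- apply: (@reach_S 0 [:: M1']) HK1 _ _ _ => // K2 HK2.
  by apply: T' HK2 _ => K3 HK3; exact: reach_nil.
Qed.

Definition M2 : seq (nat * nat) := [:: (0,1); (3,2); (4,5)].
Definition K2 : seq (nat * nat) := [:: (1,0); (2,3)].
Definition L2 : seq (nat * nat) := [:: (0,1)].
Definition I1 : seq (nat * nat) := [:: (0,0); (3,3)].
Definition I2 : seq (nat * nat) := [:: (1,1); (2,2)].
Definition E45 : seq (nat * nat) := [:: (4,5)].
Definition LL2 := [:: M2; K2; L2].
Definition F2 := seq.map stmt_of LL2.
Definition TX := [:: E45; K2; I1; I2].
Definition SY := [:: E45; [:: (2,3)]; L2].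


Lemma TX_T G w Lf : rep G TX -> (forall K, rep K TX -> reach w K Lf) ->
    reach (OpT :: w) G Lf.
Proof.
move=> HG Hn; apply: (@reach_T _ _ _ TX [:: [:: E45]; [:: K2]; [:: I1]; [:: I2]]) HG _ _ _ _ _ Hn; by [].
Qed.

Lemma SY_T G w Lf : rep G SY -> (forall K, rep K SY -> reach w K Lf) ->
    reach (OpT :: w) G Lf.
Proof.
move=> HG Hn; apply: (@reach_T _ _ _ SY [:: [:: E45]; [:: [:: (2,3)]]; [:: L2]]) HG _ _ _ _ _ Hn; by [].
Qed.

Lemma F2_X X : X = [:: OpT; OpS] \/ X = [:: OpT; OpS; OpT] ->
  reach X (sem F2) TX.
Proof.
have H0 := rep_sem LL2.
have T0 : forall w Lf, (forall K, rep K [:: M2; K2; I1; I2] -> reach w K Lf) ->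
    reach (OpT :: w) (sem F2) Lf.
  move=> w Lf Hn.
  apply: (@reach_T _ _ _ [:: M2; K2; I1; I2] [:: [:: M2]; [:: K2]; [:: M2; K2]; [:: K2; M2]]) H0 _ _ _ _ _ Hn; by [].
case=> ->; apply: T0 => K HK; apply: (@reach_S 1 TX) HK _ _ _ => // K1 HK1.
- exact: reach_nil.
- by apply: TX_T HK1 _ => K2' /reach_nil.
Qed.

Lemma F2_Y Y : Y = [:: OpS; OpT] \/ Y = [:: OpS; OpT; OpS] \/ Y = [:: OpS; OpT; OpS; OpT] ->
  reach Y (sem F2) SY.
Proof.
have H0 := rep_sem LL2.
case=> [->|[->|->]]; apply: (@reach_S 1 SY) H0 _ _ _ => // K HK;
  apply: SY_T HK _ => K1 HK1.
- exact: reach_nil.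
- by apply: (@reach_S 0 SY) HK1 _ _ _ => // K2' HK2; exact: reach_nil.
- apply: (@reach_S 0 SY) HK1 _ _ _ => // K2' HK2.
  by apply: SY_T HK2 _ => K3 HK3; exact: reach_nil.
Qed.

Theorem mainTheorem10 (X Y : list op) :
  (X = [:: OpT; OpS] \/ X = [:: OpT; OpS; OpT]) ->
  (Y = [:: OpS; OpT] \/ Y = [:: OpS; OpT; OpS] \/ Y = [:: OpS; OpT; OpS; OpT]) ->
  ~ contained X Y /\ ~ contained Y X.
Proof.
move=> HX HY; split=> Hc.
- have [GX [EX RX]] := F1_X HX.
  have [GY [EY RY]] := F1_Y HY.
  have wf : wf_formula F1 by apply: wf_sem.
  have := Hc s0 F1 wf GX GY EX EY (pt 1) (pt 0).
  rewrite (induced_rep _ _ RX) (induced_rep _ _ RY).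
  by move=> /(_ isT).
- have [GX [EX RX]] := F2_X HX.
  have [GY [EY RY]] := F2_Y HY.
  have wf : wf_formula F2 by apply: wf_sem.
  have := Hc s0 F2 wf GY GX EY EX (pt 0) (pt 1).
  rewrite (induced_rep _ _ RX) (induced_rep _ _ RY).
  by move=> /(_ isT).
Qed.
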